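(* Let $S=\{1,\dots,k\}$ with $k\ge3$ and $c\in\mathbb{R}_+$. Both $\rho_c$ and $\overline\rho_c$ are t-monotone submodular functions on $2^{S^\pm}$, and $B_c=\mathcal{B}(\rho_c)$, $\overline B_c=\mathcal{B}(\overline\rho_c)$.
   Context: $S^\pm=S\times\{\pm1\}$, $i^\pm=(i,\pm1)$, $S^\pm\supseteq S^+=\{i^+\}$, $S^-=\{i^-\}$. For $X\subseteq S^\pm$ write $X^+=X\cap S^+$, $X^-=X\cap S^-$, and let $\underline X$ be obtained from $X$ by removing every pair $\{i^+,i^-\}\subseteq X$. A function $\rho$ on $2^{S^\pm}$ with $\rho(\emptyset)=0$ is submodular if $\rho(X)+\rho(Y)\ge\rho(X\cap Y)+\rho(X\cup Y)$, t-monotone if $\rho(\underline X)\le\rho(X)$ for all $X$; $\mathcal{B}(\rho)=\{x\in\mathbb{R}^{S^\pm}:x(S^\pm)=\rho(S^\pm),\ x(X)\le\rho(X)\ \forall X\}$. Types: for $u,v\in\{0,1,2\}$, $X$ is of type $uv$ if $|X^+|=u$ when $u\in\{0,1\}$ and $|X^+|\ge2$ when $u=2$, and $|X^-|=k-v$ when $v\in\{0,1\}$ and $|X^-|\le k-2$ when $v=2$. $X$ is of type $11^*$ if $X^+=\{i^+\}$ and $X^-=S^-\setminus\{i^-\}$ for some $i\in S$; ''type 11'' means type 11 but not type $11^*$. Define $\rho_c(X)=2c$ if $X$ is of type 22, $\rho_c(X)=c$ if $X$ is of type 11, 12 or 21, and $\rho_c(X)=0$ otherwise; and $\overline\rho_c(X)=c\,(\min\{|X^+|,2\}+\min\{k-2-|X^-|,0\})$.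 $B_c$ is the set of $x\in\mathbb{R}^{S^\pm}$ with $x(S^\pm)=0$, $x(S^+)\le 2c$, $x(i^+)+x(S^-\setminus\{i^-\})\le0$ ($i\in S$), $0\le x(i^+)\le c$ and $-c\le x(i^-)\le0$ ($i\in S$); $\overline B_c$ consists of $x\in B_c$ with additionally $x(S^-)\le-2c$. *)

(* Defs.v *)
From HB Require Import structures.
From mathcomp Require Import all_boot all_order all_algebra.
Set Implicit Arguments. Unset Strict Implicit. Unset Printing Implicit Defensive.
Import Order.TTheory GRing.Theory Num.Theory.
Local Open Scope ring_scope.

(* S = 'I_k (i.e. {0,...,k-1}, a relabelling of {1,...,k});
   S^pm = 'I_k * bool, with (i, true) = i^+ and (i, false) = i^-. *)
Definition Spm (k : nat) : finType := ('I_k * bool)%type.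

Section Defs.
Variable k : nat.
Variable R : realFieldType.

Definition plus_part (X : {set Spm k}) : {set Spm k} := [set p in X | p.2].
Definition minus_part (X : {set Spm k}) : {set Spm k} := [set p in X | ~~ p.2].

Definition reduce (X : {set Spm k}) : {set Spm k} :=
  [set p in X | (p.1, ~~ p.2) \notin X].

Definition submodular (rho : {set Spm k} -> R) : Prop :=
  forall X Y : {set Spm k}, rho (X :&: Y) + rho (X :|: Y) <= rho X + rho Y.

Definition t_monotone (rho : {set Spm k} -> R) : Prop :=
  forall X : {set Spm k}, rho (reduce X) <= rho X.

Definition xsum (x : Spm k -> R) (X : {set Spm k}) : R := \sum_(p in X) x p.

Definition in_base (rho : {set Spm k} -> R) (x : Spm k -> R) : Prop :=
  xsum x [set: Spm k] = rho [set: Spm k] /\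
  forall X : {set Spm k}, xsum x X <= rho X.

Definition ptype (X : {set Spm k}) (u : nat) : bool :=
  match u with
  | 0%N => #|plus_part X| == 0%N
  | 1%N => #|plus_part X| == 1%N
  | _ => (2 <= #|plus_part X|)%N
  end.
Definition mtype (X : {set Spm k}) (v : nat) : bool :=
  match v with
  | 0%N => #|minus_part X| == k
  | 1%N => #|minus_part X| == k.-1
  | _ => (#|minus_part X| <= k - 2)%N
  end.
Definition is_type (X : {set Spm k}) (u v : nat) : bool := ptype X u && mtype X v.

Definition is_type11star (X : {set Spm k}) : bool :=
  [exists i : 'I_k, (plus_part X == [set ((i, true) : Spm k)]) &&
                    (minus_part X == [set p : Spm k | ~~ p.2 & p.1 != i])].

Definition rho_c (c : R) (X : {set Spm k}) : R :=
  if is_type X 2 2 then 2 * c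
  else if [|| is_type X 1 1 && ~~ is_type11star X, is_type X 1 2 | is_type X 2 1]
  then c else 0.

Definition rhobar_c (c : R) (X : {set Spm k}) : R :=
  c * ((Num.min (#|plus_part X|%:Z) 2) + Num.min (k%:Z - 2 - #|minus_part X|%:Z) 0)%:~R.

Definition in_Bc (c : R) (x : Spm k -> R) : Prop :=
  [/\ xsum x [set: Spm k] = 0,
      xsum x [set p : Spm k | p.2] <= 2 * c,
      forall i : 'I_k,
        x (i, true) + xsum x [set p : Spm k | ~~ p.2 & p.1 != i] <= 0,
      forall i : 'I_k, 0 <= x (i, true) <= c
    & forall i : 'I_k, - c <= x (i, false) <= 0].

Definition in_Bbar_c (c : R) (x : Spm k -> R) : Prop :=
  in_Bc c x /\ xsum x [set p : Spm k | ~~ p.2] <= - (2 * c).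

End Defs.

(* Main.v *)
Require Import Defs.
From HB Require Import structures.
From mathcomp Require Import all_boot all_order all_algebra.
From mathcomp Require Import zify ring lra.
Set Implicit Arguments. Unset Strict Implicit. Unset Printing Implicit Defensive.
Import Order.TTheory GRing.Theory Num.Theory.

Ltac nlia := unfold reverse_coercion in *; lia.

Section Work.
Variable k : nat.
Implicit Types X Y : {set Spm k}.

Definition PI X : {set 'I_k} := [set j | ((j, true) : Spm k) \in X].
Definition MI X : {set 'I_k} := [set j | ((j, false) : Spm k) \in X].

Lemma plus_partE X : plus_part X = (fun j => (j, true) : Spm k) @: PI X.
Proof.
apply/setP => [[j b]]; rewrite !inE /=.
apply/andP/imsetP => [[H Hb]|[j' ]]; first by exists j; rewrite ?inE // -Hb.
by rewrite inE => H [-> ->].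
Qed.

Lemma minus_partE X : minus_part X = (fun j => (j, false) : Spm k) @: MI X.
Proof.
apply/setP => [[j b]]; rewrite !inE /=.
apply/andP/imsetP => [[H Hb]|[j' ]]; first by exists j; rewrite ?inE //; move: Hb H; case: b.
by rewrite inE => H [-> ->].
Qed.

Lemma card_plus X : #|plus_part X| = #|PI X|.
Proof. by rewrite plus_partE card_imset // => a b []. Qed.
Lemma card_minus X : #|minus_part X| = #|MI X|.
Proof. by rewrite minus_partE card_imset // => a b []. Qed.

Lemma PI_I X Y : PI (X :&: Y) = PI X :&: PI Y. Proof. by apply/setP => j; rewrite !inE. Qed.
Lemma PI_U X Y : PI (X :|: Y) = PI X :|: PI Y. Proof. by apply/setP => j; rewrite !inE. Qed.
Lemma MI_I X Y : MI (X :&: Y) = MI X :&: MI Y. Proof. by apply/setP => j; rewrite !inE. Qed.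
Lemma MI_U X Y : MI (X :|: Y) = MI X :|: MI Y. Proof. by apply/setP => j; rewrite !inE. Qed.
Lemma PI_red X : PI (reduce X) = PI X :\: MI X. Proof. by apply/setP => j; rewrite !inE andbC. Qed.
Lemma MI_red X : MI (reduce X) = MI X :\: PI X. Proof. by apply/setP => j; rewrite !inE andbC. Qed.

Lemma memPI X j : (((j, true) : Spm k) \in X) = (j \in PI X). Proof. by rewrite inE. Qed.
Lemma memMI X j : (((j, false) : Spm k) \in X) = (j \in MI X). Proof. by rewrite inE. Qed.

Lemma card_le_k (A : {set 'I_k}) : (#|A| <= k)%N.
Proof. by rewrite -[X in (_ <= X)%N](card_ord k) max_card. Qed.

Definition sstar (A B Q : nat) : bool := [&& A == 1%N, B == k.-1 & Q == 0%N].

Lemma starE X : is_type11star X = sstar #|PI X| #|MI X| #|PI X :&: MI X|.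
Proof.
rewrite /is_type11star /sstar.
apply/existsP/and3P => [[i /andP[/eqP Hp /eqP Hm]]|[/cards1P[i Hi] HB /eqP HQ]].
  have HP : PI X = [set i].
    apply/setP => j; move/setP: Hp => /(_ (j, true)).
    by rewrite /= !inE /= andbT xpair_eqE andbT.
  have HM : MI X = [set~ i].
    apply/setP => j; move/setP: Hm => /(_ (j, false)).
    rewrite /= !inE /= andbT => ->; by [].
  rewrite HP HM cards1 cardsC1 card_ord; split => //.
  rewrite (_ : _ :&: _ = set0) ?cards0 //; apply/setP => j; rewrite !inE.
  by case: (j == i).
have HM : MI X = [set~ i].
  apply/eqP; rewrite eqEcard cardsC1 card_ord (eqP HB) leqnn andbT.
  apply/subsetP => j Hj; rewrite !inE; apply/eqP => Hji; subst j.
  move/eqP: HQ; rewrite cards_eq0 => /eqP HQ.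
  have : i \in PI X :&: MI X by rewrite inE Hi set11 Hj.
  by rewrite HQ inE.
exists i; apply/andP; split; apply/eqP/setP => [[j b]]; rewrite !inE /=; case: b => /=.
- by rewrite andbT memPI Hi inE xpair_eqE andbT.
- by rewrite andbF xpair_eqE andbF.
- by rewrite andbF.
- by rewrite andbT memMI HM !inE.
Qed.

Definition Fn (A B Q : nat) : nat := minn (minn A (k - B)) 2 - sstar A B Q.

Lemma Fn_val A B Q : (1 < k)%N -> (B <= k)%N -> Fn A B Q =
  if (1 < A) && (B <= k - 2) then 2
  else if [|| (A == 1) && (B == k.-1) && ~~ sstar A B Q, (A == 1) && (B <= k - 2) | (1 < A) && (B == k.-1)]
  then 1 else 0.
Proof. rewrite /Fn /sstar => k0 hB; repeat (case: eqP => ? /=); repeat (case: ifP => ?); lia. Qed.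

Lemma Fn_spec A B Q : (0 < k)%N ->
  [/\ (Fn A B Q + sstar A B Q <= A)%N, (Fn A B Q + sstar A B Q <= k - B)%N,
      (Fn A B Q + sstar A B Q <= 2)%N,
      (Fn A B Q + sstar A B Q = A \/ Fn A B Q + sstar A B Q = k - B \/ Fn A B Q + sstar A B Q = 2)%N &
      ((nat_of_bool (sstar A B Q) <= 1)%N /\ ((nat_of_bool (sstar A B Q) = 1%N) <-> (A = 1%N /\ B = k.-1 /\ Q = 0%N)))].
Proof.
move=> k0; rewrite /Fn /sstar.
case: eqP => ?; case: eqP => ?; case: eqP => ? /=; split; lia.
Qed.

Lemma gen_ineq (ai au aX aY di du dX dY fi fu fX fY : nat) :
  (ai + au = aX + aY)%N -> (ai <= aX)%N -> (ai <= aY)%N ->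
  (di + du = dX + dY)%N -> (du <= dX)%N -> (du <= dY)%N ->
  (fi <= ai)%N -> (fi <= di)%N -> (fi <= 2)%N -> (fu <= au)%N -> (fu <= du)%N -> (fu <= 2)%N ->
  (fX <= aX)%N -> (fX <= dX)%N -> (fX <= 2)%N -> (fX = aX \/ fX = dX \/ fX = 2)%N ->
  (fY <= aY)%N -> (fY <= dY)%N -> (fY <= 2)%N -> (fY = aY \/ fY = dY \/ fY = 2)%N ->
  (fi + fu <= fX + fY)%N.
Proof. lia. Qed.

Lemma Fn_gen (Ai Au AX AY Bi Bu BX BY Qi Qu QX QY : nat) : (1 < k)%N ->
  (Ai + Au = AX + AY)%N -> (Ai <= AX)%N -> (Ai <= AY)%N ->
  (Bi + Bu = BX + BY)%N -> (Bi <= BX)%N -> (Bi <= BY)%N -> (Bu <= k)%N -> (BX <= k)%N -> (BY <= k)%N ->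
  ~~ sstar AX BX QX -> ~~ sstar AY BY QY ->
  (Fn Ai Bi Qi + Fn Au Bu Qu <= Fn AX BX QX + Fn AY BY QY)%N.
Proof.
move=> k1 h1 h2 h3 h4 h5 h6 h7 h8 h9 /negbTE n1 /negbTE n2.
have k0 : (0 < k)%N by lia.
have [x1 x2 x3 _ _] := Fn_spec Ai Bi Qi k0.
have [y1 y2 y3 _ _] := Fn_spec Au Bu Qu k0.
have [z1 z2 z3 z4 _] := Fn_spec AX BX QX k0.
have [w1 w2 w3 w4 _] := Fn_spec AY BY QY k0.
rewrite n1 addn0 in z1 z2 z3 z4.
rewrite n2 addn0 in w1 w2 w3 w4.
apply: (gen_ineq (di := k - Bi) (du := k - Bu) h1 h2 h3 _ _ _ _ _ _ _ _ _ z1 z2 z3 z4 w1 w2 w3 w4); lia.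
Qed.

End Work.


Section Work2.
Variable k : nat.
Implicit Types X Y : {set Spm k}.
Local Notation Fn := (Fn k).
Local Notation sstar := (sstar k).
Local Notation PI := (@PI k).
Local Notation MI := (@MI k).
Local Notation Fn_spec := (@Fn_spec k).
Lemma star_ineq (AY dY QY e1 e2 au du fi si fu su fY sY : nat) :
  (e1 <= 1 -> e2 <= 1 -> e1 <= AY -> 1 <= dY + e2 -> (e1 = 1 -> e2 = 1 -> 1 <= QY) ->
  AY + 1 <= QY + dY + e1 + e2 ->
  si <= 1 -> su <= 1 -> sY <= 1 ->
  fi + si <= e1 -> fi + si <= dY + e2 -> (e1 = 1 -> dY + e2 = 1 -> si = 1) ->
  au + e1 = AY + 1 -> du + e2 = 1 ->
  fu + su <= au -> fu + su <= du -> (au = 1 -> e2 = 0 -> su = 1) ->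
  fY + sY <= AY -> fY + sY <= dY -> fY + sY <= 2 -> (fY + sY = AY \/ fY + sY = dY \/ fY + sY = 2) ->
  (sY = 1 -> AY = 1 /\ dY = 1 /\ QY = 0) ->
  fi + fu <= fY)%N.
Proof. lia. Qed.

Lemma Fn_star (AY BY QY e1 e2 Bi Qi Au Bu Qu : nat) : (2 < k)%N ->
  (e1 <= 1)%N -> (e2 <= 1)%N -> (e1 <= AY)%N -> (e2 <= BY)%N -> (BY <= k)%N ->
  (BY <= k.-1 + e2)%N -> (e1 = 1%N -> e2 = 1%N -> 1 <= QY)%N ->
  (AY + BY <= QY + k.-1 + e1 + e2)%N -> (Bi + e2 = BY)%N -> Qi = 0%N ->
  (Au + e1 = AY + 1)%N -> Bu = (k.-1 + e2)%N -> (Au = 1%N -> e2 = 0%N -> Qu = 0%N) ->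
  (Fn e1 Bi Qi + Fn Au Bu Qu <= Fn AY BY QY)%N.
Proof.
move=> k2 he1 he2 h1 h2 h3 h4 h5 h6 h7 h8 h9 h10 h11.
have k0 : (0 < k)%N by lia.
have [x1 x2 x3 _ [x5 x6]] := Fn_spec e1 Bi Qi k0.
have [z1 z2 z3 _ [z5 z6]] := Fn_spec Au Bu Qu k0.
have [w1 w2 w3 w4 [w5 w6]] := Fn_spec AY BY QY k0.
move: x1 x2 x3 x5 x6 z1 z2 z3 z5 z6 w1 w2 w3 w4 w5 w6.
move: (Fn e1 Bi Qi) (nat_of_bool (sstar e1 Bi Qi)) (Fn Au Bu Qu) (nat_of_bool (sstar Au Bu Qu))
  (Fn AY BY QY) (nat_of_bool (sstar AY BY QY)) => fi si fu su fY sY.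
move=> x1 x2 x3 x5 x6 z1 z2 z3 z5 z6 w1 w2 w3 w4 w5 w6.
have x6' : (e1 = 1 -> k - BY + e2 = 1 -> si = 1)%N by move=> E1 E2; apply/x6; clear -E1 E2 h3 h7 h8 k0; lia.
have z6' : (Au = 1 -> e2 = 0 -> su = 1)%N by move=> E1 E2; apply/z6; clear -E1 E2 h10 h11 k0; lia.
have w6' : (sY = 1 -> AY = 1 /\ k - BY = 1 /\ QY = 0)%N by move/w6; clear -h3 k0; lia.
clear x6 z6 w6.
apply: (star_ineq (dY := k - BY) (au := Au) (du := k - Bu) (QY := QY) (fi := fi) (si := si)
   he1 he2 h1 _ h5 _ x5 z5 w5 _ _ x6' h9 _ _ _ z6' _ _ _ w4 w6'); lia.
Qed.

Definition FX X := Fn #|PI X| #|MI X| #|PI X :&: MI X|.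
Definition sX X := sstar #|PI X| #|MI X| #|PI X :&: MI X|.

Lemma star_sets X : sX X -> exists i, PI X = [set i] /\ MI X = [set~ i].
Proof.
case/and3P => [/cards1P[i Hi] HB /eqP HQ]; exists i; split => //.
apply/eqP; rewrite eqEcard cardsC1 card_ord (eqP HB) leqnn andbT.
apply/subsetP => j Hj; rewrite !inE; apply/eqP => Hji; subst j.
move/eqP: HQ; rewrite cards_eq0 => /eqP HQ.
have : i \in PI X :&: MI X by rewrite inE Hi set11 Hj.
by rewrite HQ inE.
Qed.

Lemma cI1 (i : 'I_k) (A : {set 'I_k}) : #|[set i] :&: A| = (i \in A).
Proof.
case: (boolP (i \in A)) => H.
  by rewrite (setIidPl _) ?cards1 // sub1set.
rewrite (_ : _ :&: _ = set0) ?cards0 //; apply/setP => j; rewrite !inE.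
by case: eqP => // ->; rewrite (negbTE H).
Qed.

Lemma cIC1 (i : 'I_k) (A : {set 'I_k}) : (#|[set~ i] :&: A| + (i \in A) = #|A|)%N.
Proof.
rewrite (cardsD1 i A) addnC; congr (_ + _)%N.
by apply: eq_card => j; rewrite !inE andbC.
Qed.

Lemma cU1 (i : 'I_k) (A : {set 'I_k}) : (#|[set i] :|: A| + (i \in A) = #|A| + 1)%N.
Proof. by rewrite cardsU1; case: (i \in A) => /=; rewrite ?add0n ?addn0 // addnC. Qed.

Lemma cUC1 (i : 'I_k) (A : {set 'I_k}) : #|[set~ i] :|: A| = (k.-1 + (i \in A))%N.
Proof.
case: (boolP (i \in A)) => H.
  rewrite (_ : _ :|: _ = setT) ?cardsT ?card_ord.
    by case: k i {A H} => [[]|n] //= _; rewrite addn1.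
  by apply/setP => j; rewrite !inE; case: eqP => // ->.
rewrite (setUidPl _) ?cardsC1 ?card_ord ?addn0 //.
by apply/subsetP => j Hj; rewrite !inE; apply/eqP => E; rewrite -E Hj in H.
Qed.

Lemma cQ1 (i : 'I_k) (A B : {set 'I_k}) : i \in A -> i \in B -> (1 <= #|A :&: B|)%N.
Proof. by move=> hA hB; rewrite card_gt0; apply/set0Pn; exists i; rewrite inE hA hB. Qed.

Lemma cQ2 (i : 'I_k) (A B : {set 'I_k}) :
  (#|A| + #|B| <= #|A :&: B| + k.-1 + (i \in A) + (i \in B))%N.
Proof.
have h2 : (#|A :\ i| + #|B :\ i| <= k.-1 + #|(A :\ i) :&: (B :\ i)|)%N.
  rewrite -cardsUI leq_add2r.
  rewrite -[X in (_ <= X.-1)%N](card_ord k) -(cardsC1 i); apply: subset_leq_card; apply/subsetP => j.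
  by rewrite !inE; case/orP => /andP[].
have h3 : (#|(A :\ i) :&: (B :\ i)| <= #|A :&: B|)%N.
  by apply: subset_leq_card; apply/subsetP => j; rewrite !inE => /andP[/andP[_ ->] /andP[_ ->]].
have h4 := cardsD1 i A; have h5 := cardsD1 i B.
nlia.
Qed.

Lemma sub_starX X Y : (2 < k)%N -> sX X ->
  (FX (X :&: Y) + FX (X :|: Y) <= FX X + FX Y)%N.
Proof.
move=> k2 /star_sets [i [HP HM]].
have k0 : (0 < k)%N by lia.
rewrite /FX PI_I PI_U MI_I MI_U HP HM.
have -> : Fn #|[set i]| #|[set~ i]| #|[set i] :&: [set~ i]| = 0%N.
  rewrite cards1 cardsC1 card_ord (_ : _ :&: _ = set0) ?cards0.
    by rewrite /Fn /sstar !eqxx /=; lia.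
  by apply/setP => j; rewrite !inE; case: eqP.
rewrite add0n.
have q0 : #|[set i] :&: PI Y :&: ([set~ i] :&: MI Y)| = 0%N.
  rewrite (_ : _ :&: _ = set0) ?cards0 //.
  by apply/setP => j; rewrite !inE; case: (j == i); rewrite /= ?andbF.
have qU : #|[set i] :|: PI Y| = 1%N -> (i \in MI Y) = false ->
    #|([set i] :|: PI Y) :&: ([set~ i] :|: MI Y)| = 0%N.
  move=> h1 h2.
  have E : [set i] :|: PI Y = [set i].
    by apply/eqP; rewrite eq_sym eqEcard subsetUl cards1 h1.
  rewrite E (_ : _ :&: _ = set0) ?cards0 //.
  by apply/setP => j; rewrite !inE; case: eqP => // ->; rewrite /= memMI h2.
have a1 := cI1 i (PI Y). have b1 := cIC1 i (MI Y).
have a2 := cU1 i (PI Y). have b2 := cUC1 i (MI Y).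
have y1 := @cQ1 i (PI Y) (MI Y). have y2 := cQ2 i (PI Y) (MI Y).
have hB := card_le_k (MI Y).
have c1 := cardsD1 i (PI Y). have c2 := cardsD1 i (MI Y).
have c3 : (#|[set~ i] :&: MI Y| <= k.-1)%N.
  by rewrite -[X in (_ <= X.-1)%N](card_ord k) -(cardsC1 i); apply: subset_leq_card; apply: subsetIl.
move: a1 b1 a2 b2 y1 y2 qU c1 c2 c3.
case: (i \in PI Y); case: (i \in MI Y) => /= a1 b1 a2 b2 y1 y2 qU c1 c2 c3.
1,3: apply: (Fn_star (e2 := 1%N) k2) => //; try (move=> *; apply: qU); nlia.
all: apply: (Fn_star (e2 := 0%N) k2) => //; try (move=> *; apply: qU); nlia.
Qed.

Lemma FX_sub X Y : (2 < k)%N -> (FX (X :&: Y) + FX (X :|: Y) <= FX X + FX Y)%N.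
Proof.
move=> k2.
case: (boolP (sX X)) => hX; first exact: (sub_starX Y k2 hX).
case: (boolP (sX Y)) => hY.
  by rewrite setIC setUC [(FX X + _)%N]addnC; apply: (sub_starX X k2 hY).
rewrite /FX PI_I PI_U MI_I MI_U.
apply: Fn_gen => //.
- lia.
- by rewrite addnC cardsUI.
- exact/subset_leq_card/subsetIl.
- exact/subset_leq_card/subsetIr.
- by rewrite addnC cardsUI.
- exact/subset_leq_card/subsetIl.
- exact/subset_leq_card/subsetIr.
- exact: card_le_k.
- exact: card_le_k.
- exact: card_le_k.
Qed.

Lemma Fn_red (A B Q A' B' : nat) : (1 < k)%N ->
  A = (A' + Q)%N -> B = (B' + Q)%N -> (A' + B <= k)%N ->
  (Fn A' B' 0 <= Fn A B Q)%N.
Proof.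
move=> k1 h1 h2 h3.
have k0 : (0 < k)%N by lia.
have [x1 x2 x3 _ [x5 x6]] := Fn_spec A' B' 0%N k0.
have [w1 w2 w3 w4 [w5 w6]] := Fn_spec A B Q k0.
move: x1 x2 x3 x5 x6 w1 w2 w3 w4 w5 w6.
move: (Fn A' B' 0) (nat_of_bool (sstar A' B' 0)) (Fn A B Q) (nat_of_bool (sstar A B Q)) => fi si fY sY.
move=> x1 x2 x3 x5 x6 w1 w2 w3 w4 w5 w6.
have x6' : (A' = 1 -> B' = k.-1 -> si = 1)%N by move=> E1 E2; apply/x6; clear -E1 E2; lia.
have w6' : (sY = 1 -> A = 1 /\ B = k.-1 /\ Q = 0)%N by move/w6.
clear x6 w6.
lia.
Qed.

Lemma FX_red X : (1 < k)%N -> (FX (reduce X) <= FX X)%N.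
Proof.
move=> k1; rewrite /FX PI_red MI_red.
rewrite (_ : (PI X :\: MI X) :&: (MI X :\: PI X) = set0) ?cards0; last first.
  by apply/setP => j; rewrite !inE; case: ((j, true) \in X); case: ((j, false) \in X).
apply: Fn_red => //.
- by rewrite addnC cardsID.
- by rewrite addnC setIC cardsID.
- rewrite -cardsUI (_ : (PI X :\: MI X) :&: MI X = set0) ?cards0 ?addn0 ?card_le_k //.
  by apply/setP => j; rewrite !inE; case: ((j, false) \in X); rewrite ?andbF.
Qed.

End Work2.


Section Work3.
Variable k : nat.
Implicit Types X Y : {set Spm k}.
Local Notation Fn := (Fn k).
Local Notation sstar := (sstar k).
Local Notation PI := (@PI k).
Local Notation MI := (@MI k).
Local Notation FX := (@FX k).
Local Notation Fn_spec := (@Fn_spec k).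

Lemma Fn_cases A B Q : (0 < k)%N -> (B <= k)%N ->
  (Fn A B Q = 0 /\ (A = 0 \/ B = k \/ nat_of_bool (sstar A B Q) = 1)) \/
  (Fn A B Q = 1 /\ (A = 1 \/ B = k.-1)) \/ Fn A B Q = 2.
Proof.
move=> k0 hB; have [x1 x2 x3 x4 [x5 x6]] := Fn_spec A B Q k0.
move: x1 x2 x3 x4 x5 x6; move: (Fn A B Q) (nat_of_bool (sstar A B Q)) => f s.
move=> x1 x2 x3 x4 x5 x6.
have x6' : (s = 1 -> A = 1)%N by move/x6; lia.
clear x6. lia.
Qed.

Lemma Fn_1k1 : (0 < k)%N -> Fn 1 k.-1 0 = 0%N.
Proof.
move=> k0; have [x1 x2 x3 x4 [x5 x6]] := Fn_spec 1 k.-1 0 k0.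
have : nat_of_bool (sstar 1 k.-1 0) = 1%N by apply/x6.
clear x6; lia.
Qed.

Lemma Fn_zero A B Q : (0 < k)%N -> (A = 0 \/ B = k)%N -> Fn A B Q = 0%N.
Proof. move=> k0 h; have [x1 x2 x3 x4 [x5 x6]] := Fn_spec A B Q k0; clear x6; lia. Qed.

Lemma Fn_two A B Q : (2 < k)%N -> (2 <= A)%N -> (B + 2 <= k)%N -> Fn A B Q = 2%N.
Proof.
move=> k2 hA hB; have k0 : (0 < k)%N by lia.
have [x1 x2 x3 x4 [x5 x6]] := Fn_spec A B Q k0.
have : nat_of_bool (sstar A B Q) = 0%N by move: x5 x6; case: (nat_of_bool _) => [|[|n]] //; lia.
clear x6; lia.
Qed.

Lemma Fn_one A B Q : (2 < k)%N -> (1 <= A)%N -> (B < k)%N -> (A = 1 \/ B = k.-1)%N -> (A != 1%N) || (B != k.-1) ->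
  Fn A B Q = 1%N.
Proof.
move=> k2 hA hB h h'; have k0 : (0 < k)%N by lia.
have [x1 x2 x3 x4 [x5 x6]] := Fn_spec A B Q k0.
have : nat_of_bool (sstar A B Q) = 0%N.
  by rewrite /sstar; move: h'; case: eqP => //= _; case: eqP.
clear x6; lia.
Qed.

Local Open Scope ring_scope.

Variable R : realFieldType.

Lemma rho_cE (c : R) X : (1 < k)%N -> rho_c c X = c * (FX X)%:R.
Proof.
move=> k0; rewrite /rho_c /is_type /ptype /mtype /= starE !card_plus !card_minus.
rewrite /FX Fn_val ?card_le_k //.
case: ifP => _; first by rewrite mulrC.
by case: ifP => _; rewrite ?mulr1 ?mulr0.
Qed.

Definition Gn (A B : nat) : int := Num.min (A%:Z) 2 + Num.min (k%:Z - 2 - B%:Z) 0.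
Definition GX X := Gn #|PI X| #|MI X|.

Lemma rhobar_cE (c : R) X : rhobar_c c X = c * (GX X)%:~R.
Proof. by rewrite /rhobar_c card_plus card_minus. Qed.

Lemma Gn_gen (Ai Au AX AY Bi Bu BX BY : nat) :
  (Ai + Au = AX + AY)%N -> (Ai <= AX)%N -> (Ai <= AY)%N ->
  (Bi + Bu = BX + BY)%N -> (Bi <= BX)%N -> (Bi <= BY)%N ->
  Gn Ai Bi + Gn Au Bu <= Gn AX BX + Gn AY BY.
Proof. rewrite /Gn; lia. Qed.

Lemma Gn_red (A B Q A' B' : nat) :
  A = (A' + Q)%N -> B = (B' + Q)%N -> (A' + B <= k)%N -> Gn A' B' <= Gn A B.
Proof. rewrite /Gn; lia. Qed.

Lemma GX_sub X Y : GX (X :&: Y) + GX (X :|: Y) <= GX X + GX Y.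
Proof.
rewrite /GX PI_I PI_U MI_I MI_U.
apply: Gn_gen.
- by rewrite addnC cardsUI.
- exact/subset_leq_card/subsetIl.
- exact/subset_leq_card/subsetIr.
- by rewrite addnC cardsUI.
- exact/subset_leq_card/subsetIl.
- exact/subset_leq_card/subsetIr.
Qed.

Lemma GX_red X : GX (reduce X) <= GX X.
Proof.
rewrite /GX PI_red MI_red.
apply: (@Gn_red _ _ #|PI X :&: MI X|).
- by rewrite addnC cardsID.
- by rewrite addnC setIC cardsID.
- rewrite -cardsUI (_ : (PI X :\: MI X) :&: MI X = set0) ?cards0 ?addn0 ?card_le_k //.
  by apply/setP => j; rewrite !inE; case: ((j, false) \in X); rewrite ?andbF.
Qed.

End Work3.


Section Work4.
Variable k : nat.
Implicit Types X Y : {set Spm k}.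
Local Notation PI := (@PI k).
Local Notation MI := (@MI k).
Local Notation Sp := [set p : Spm k | p.2].
Local Notation Sm := [set p : Spm k | ~~ p.2].
Local Notation Sst i := (((i, true) : Spm k) |: [set p : Spm k | ~~ p.2 & p.1 != i]).

Lemma plus_T : plus_part [set: Spm k] = Sp. Proof. by apply/setP => p; rewrite !inE. Qed.
Lemma minus_T : minus_part [set: Spm k] = Sm. Proof. by apply/setP => p; rewrite !inE. Qed.
Lemma PI_T : PI setT = setT. Proof. by apply/setP => p; rewrite !inE. Qed.
Lemma MI_T : MI setT = setT. Proof. by apply/setP => p; rewrite !inE. Qed.
Lemma PI_Sp : PI Sp = setT. Proof. by apply/setP => p; rewrite !inE. Qed.
Lemma MI_Sp : MI Sp = set0. Proof. by apply/setP => p; rewrite !inE. Qed.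
Lemma PI_Sm : PI Sm = set0. Proof. by apply/setP => p; rewrite !inE. Qed.
Lemma MI_Sm : MI Sm = setT. Proof. by apply/setP => p; rewrite !inE. Qed.
Lemma PI_Sst i : PI (Sst i) = [set i].
Proof. by apply/setP => j; rewrite !inE xpair_eqE andbT /= orbF. Qed.
Lemma MI_Sst i : MI (Sst i) = [set~ i].
Proof. by apply/setP => j; rewrite !inE xpair_eqE andbF. Qed.
Lemma PI_C1t i : PI [set~ ((i, true) : Spm k)] = [set~ i].
Proof. by apply/setP => j; rewrite !inE xpair_eqE andbT. Qed.
Lemma MI_C1t i : MI [set~ ((i, true) : Spm k)] = setT.
Proof. by apply/setP => j; rewrite !inE xpair_eqE andbF. Qed.
Lemma PI_1t i : PI [set ((i, true) : Spm k)] = [set i].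
Proof. by apply/setP => j; rewrite !inE xpair_eqE andbT. Qed.
Lemma MI_1t i : MI [set ((i, true) : Spm k)] = set0.
Proof. by apply/setP => j; rewrite !inE xpair_eqE andbF. Qed.
Lemma PI_1f i : PI [set ((i, false) : Spm k)] = set0.
Proof. by apply/setP => j; rewrite !inE xpair_eqE andbF. Qed.
Lemma MI_1f i : MI [set ((i, false) : Spm k)] = [set i].
Proof. by apply/setP => j; rewrite !inE xpair_eqE andbT. Qed.
Lemma PI_C1f i : PI [set~ ((i, false) : Spm k)] = setT.
Proof. by apply/setP => j; rewrite !inE xpair_eqE andbF. Qed.
Lemma MI_C1f i : MI [set~ ((i, false) : Spm k)] = [set~ i].
Proof. by apply/setP => j; rewrite !inE xpair_eqE andbT. Qed.

Lemma set1C0 (i : 'I_k) : [set i] :&: [set~ i] = set0.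
Proof. by apply/setP => j; rewrite !inE; case: eqP. Qed.

Lemma cardTk : #|[set: 'I_k]| = k. Proof. by rewrite cardsT card_ord. Qed.
Lemma cardC1k (i : 'I_k) : #|[set~ i]| = k.-1. Proof. by rewrite cardsC1 card_ord. Qed.

Local Open Scope ring_scope.
Variable R : realFieldType.
Implicit Types x : Spm k -> R.

Lemma xsum_split x X : xsum x X = xsum x (plus_part X) + xsum x (minus_part X).
Proof.
rewrite /xsum (bigID (fun p : Spm k => p.2)) /=.
by congr (_ + _); apply: eq_bigl => p; rewrite !inE.
Qed.

Lemma xsum_D x (A B : {set Spm k}) : A \subset B -> xsum x B = xsum x A + xsum x (B :\: A).
Proof. by move=> sAB; rewrite /xsum (big_setID A) (setIidPr sAB). Qed.

Lemma xsum_ub x (A : {set Spm k}) (c : R) : (forall p, p \in A -> x p <= c) -> xsum x A <= c *+ #|A|.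
Proof. by move=> h; rewrite -sumr_const; apply: ler_sum. Qed.

Lemma xsum_lb x (A : {set Spm k}) (c : R) : (forall p, p \in A -> c <= x p) -> c *+ #|A| <= xsum x A.
Proof. by move=> h; rewrite -sumr_const; apply: ler_sum. Qed.

Lemma xsum_C1 x (a : Spm k) : xsum x [set: Spm k] = x a + xsum x [set~ a].
Proof.
rewrite (xsum_D x (subsetT [set~ a])) addrC; congr (_ + _).
rewrite (_ : _ :\: _ = [set a]) ?/xsum ?big_set1 //.
by apply/setP => p; rewrite !inE negbK andbT.
Qed.

Lemma xsum_Sst x i : xsum x (Sst i) = x (i, true) + xsum x [set p : Spm k | ~~ p.2 & p.1 != i].
Proof. by rewrite /xsum big_setU1 // inE. Qed.

Lemma card_Sm : #|Sm| = k.
Proof. by rewrite -minus_T card_minus MI_T cardTk. Qed.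

Lemma fwd_facts (c : R) x X :
  xsum x [set: Spm k] = 0 ->
  (forall i : 'I_k, 0 <= x (i, true) <= c) ->
  (forall i : 'I_k, - c <= x (i, false) <= 0) ->
  [/\ xsum x Sp + xsum x Sm = 0, xsum x (minus_part X) <= 0,
      xsum x (plus_part X) <= xsum x Sp,
      xsum x (plus_part X) <= c *+ #|PI X| &
      (- c) *+ (k - #|MI X|) <= xsum x Sm - xsum x (minus_part X)].
Proof.
move=> h0 hp hm; split.
- by rewrite -h0 (xsum_split x setT) plus_T minus_T.
- apply: sumr_le0 => -[i b]; rewrite inE /= => /andP[_]; case: b => //= _.
  by case/andP: (hm i).
- have sub : plus_part X \subset Sp by apply/subsetP => p; rewrite !inE => /andP[].
  rewrite (xsum_D x sub) lerDl; apply: sumr_ge0 => -[i b]; rewrite !inE /=.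
  by case: b; rewrite ?andbF // => _; case/andP: (hp i).
- rewrite -card_plus; apply: xsum_ub => -[i b]; rewrite inE /= => /andP[_].
  by case: b => // _; case/andP: (hp i).
- have sub : minus_part X \subset Sm by apply/subsetP => p; rewrite !inE => /andP[].
  rewrite (xsum_D x sub) [xsum x (minus_part X) + _]addrC addrK.
  have -> : (k - #|MI X|)%N = #|Sm :\: minus_part X|.
    by rewrite cardsD (setIidPr sub) card_Sm card_minus.
  apply: xsum_lb => -[i b]; rewrite !inE /= => /andP[_]; case: b => //= _.
  by case/andP: (hm i).
Qed.

Lemma star_sum (c : R) x X :
  (forall i : 'I_k, x (i, true) + xsum x [set p : Spm k | ~~ p.2 & p.1 != i] <= 0) ->
  sX X -> xsum x (plus_part X) + xsum x (minus_part X) <= 0.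
Proof.
move=> hst /star_sets [i [HP HM]].
have -> : plus_part X = [set ((i, true) : Spm k)].
  by rewrite plus_partE HP imset_set1.
have -> : minus_part X = [set p : Spm k | ~~ p.2 & p.1 != i].
  apply/setP => -[j b]; rewrite !inE /=; case: b; rewrite /= ?andbF ?andbT //.
  by rewrite memMI HM !inE.
by rewrite /xsum big_set1; apply: hst.
Qed.

End Work4.


Section Work5.
Variable k : nat.
Implicit Types X Y : {set Spm k}.
Local Notation Fn := (Fn k).
Local Notation Gn := (Gn k).
Local Notation PI := (@PI k).
Local Notation MI := (@MI k).
Local Notation FX := (@FX k).
Local Notation GX := (@GX k).
Local Notation Sp := [set p : Spm k | p.2].
Local Notation Sm := [set p : Spm k | ~~ p.2].
Local Notation Sst i := (((i, true) : Spm k) |: [set p : Spm k | ~~ p.2 & p.1 != i]).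

Local Open Scope ring_scope.
Variable R : realFieldType.
Implicit Types x : Spm k -> R.

Lemma GnE (c : R) a b (n : nat) : Gn a b = n%:R -> c * (Gn a b)%:~R = c * n%:R.
Proof. by move=> ->; rewrite mulrz_nat. Qed.
Lemma GnEN (c : R) a b (n : nat) : Gn a b = - n%:R -> c * (Gn a b)%:~R = - (c * n%:R).
Proof. by move=> ->; rewrite intrN mulrz_nat mulrN. Qed.

Lemma Bc_fwd (c : R) x : (2 < k)%N -> 0 <= c -> in_Bc c x -> in_base (rho_c c) x.
Proof.
move=> k2 c0 [h0 hSp hst hp hm].
have k1 : (1 < k)%N by lia. have k0 : (0 < k)%N by lia.
split.
  by rewrite h0 rho_cE // /FX PI_T MI_T cardTk Fn_zero ?mulr0n ?mulr0 //; right.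
move=> X; rewrite rho_cE // xsum_split.
have [UV v0 uU uA vV] := fwd_facts X h0 hp hm.
have hs := @star_sum _ _ c x X hst.
rewrite /FX; have hB := card_le_k (MI X).
case: (@Fn_cases k #|PI X| #|MI X| #|PI X :&: MI X| k0 hB) => [[-> H]|[[-> H]|->]].
- case: H => [H|[H|H]].
  + rewrite H in uA; lra.
  + rewrite H subnn in vV; lra.
  + have : sX X by rewrite /sX; move: H; case: (sstar _ _ _ _).
    move/hs; lra.
- case: H => H.
  + rewrite H in uA; lra.
  + have E : (k - #|MI X|)%N = 1%N by lia.
    rewrite E in vV; lra.
- lra.
Qed.

Lemma Bc_bwd (c : R) x : (2 < k)%N -> 0 <= c -> in_base (rho_c c) x -> in_Bc c x.
Proof.
move=> k2 c0 [hT hX].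
have k1 : (1 < k)%N by lia. have k0 : (0 < k)%N by lia.
have T0 : rho_c c [set: Spm k] = 0.
  by rewrite rho_cE // /FX PI_T MI_T cardTk Fn_zero ?mulr0n ?mulr0 //; right.
split.
- by rewrite hT T0.
- have F2 : Fn k 0 0 = 2%N by apply: Fn_two; lia.
  have := hX Sp; rewrite rho_cE // /FX PI_Sp MI_Sp cardTk cards0 setI0 cards0 F2; lra.
- move=> i; have := hX (Sst i).
  by rewrite xsum_Sst rho_cE // /FX PI_Sst MI_Sst set1C0 cards1 cardC1k cards0 Fn_1k1 // mulr0n mulr0.
- move=> i; apply/andP; split.
  + have := hX [set~ ((i, true) : Spm k)].
    rewrite rho_cE // /FX PI_C1t MI_C1t cardC1k cardTk Fn_zero ?mulr0n ?mulr0 //; last by right.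
    have := xsum_C1 x ((i, true) : Spm k); rewrite hT T0; lra.
  + have F1 : Fn 1 0 0 = 1%N by apply: Fn_one; [lia | lia | lia | by left | apply/orP; right; apply/eqP; lia].
    have := hX [set ((i, true) : Spm k)].
    rewrite /xsum big_set1 rho_cE // /FX PI_1t MI_1t cards1 cards0 setI0 cards0 F1; lra.
- move=> i; apply/andP; split.
  + have F1 : Fn k k.-1 k.-1 = 1%N by apply: Fn_one; [lia | lia | lia | by right | apply/orP; left; apply/eqP; lia].
    have := hX [set~ ((i, false) : Spm k)].
    rewrite rho_cE // /FX PI_C1f MI_C1f setTI cardC1k cardTk F1.
    have := xsum_C1 x ((i, false) : Spm k); rewrite hT T0; lra.
  + have := hX [set ((i, false) : Spm k)].
    rewrite /xsum big_set1 rho_cE // /FX PI_1f MI_1f cards0 set0I cards0 Fn_zero ?mulr0n ?mulr0 //; by left.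
Qed.

Lemma Bbar_fwd (c : R) x : (2 < k)%N -> 0 <= c -> in_Bbar_c c x -> in_base (rhobar_c c) x.
Proof.
move=> k2 c0 [[h0 hSp hst hp hm] hSm].
split.
  rewrite h0 rhobar_cE /GX PI_T MI_T cardTk (@GnE _ _ _ 0%N) ?mulr0 //.
  by rewrite /Gn; lia.
move=> X; rewrite rhobar_cE xsum_split /GX /Gn intrD mulrDr.
have [UV v0 uU uA vV] := fwd_facts X h0 hp hm.
have hB := card_le_k (MI X).
have P1 : xsum x (plus_part X) <= c * (Num.min (#|PI X|%:Z) 2)%:~R.
  have [H|[H|H]] : (#|PI X| = 0 \/ #|PI X| = 1 \/ 2 <= #|PI X|)%N by lia.
  - rewrite (_ : Num.min _ _ = 0%:R) ?mulrz_nat; last by lia.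
    rewrite H in uA; lra.
  - rewrite (_ : Num.min _ _ = 1%:R) ?mulrz_nat; last by lia.
    rewrite H in uA; lra.
  - rewrite (_ : Num.min _ _ = 2%:R) ?mulrz_nat; last by lia.
    lra.
have P2 : xsum x (minus_part X) <= c * (Num.min (k%:Z - 2 - #|MI X|%:Z) 0)%:~R.
  have [H|[H|H]] : (#|MI X| = k \/ #|MI X| = k.-1 /\ (0 < k) \/ #|MI X| + 2 <= k)%N by lia.
  - rewrite (_ : Num.min _ _ = - 2%:R) ?intrN ?mulrz_nat; last by lia.
    rewrite H subnn in vV; lra.
  - rewrite (_ : Num.min _ _ = - 1%:R) ?intrN ?mulrz_nat; last by lia.
    have E : (k - #|MI X|)%N = 1%N by lia.
    rewrite E in vV; lra.
  - rewrite (_ : Num.min _ _ = 0%:R) ?mulrz_nat; last by lia.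
    lra.
lra.
Qed.

Lemma Bbar_bwd (c : R) x : (2 < k)%N -> 0 <= c -> in_base (rhobar_c c) x -> in_Bbar_c c x.
Proof.
move=> k2 c0 [hT hX].
have T0 : rhobar_c c [set: Spm k] = 0.
  rewrite rhobar_cE /GX PI_T MI_T cardTk (@GnE _ _ _ 0%N) ?mulr0 //.
  by rewrite /Gn; lia.
split; first split.
- by rewrite hT T0.
- have := hX Sp; rewrite rhobar_cE /GX PI_Sp MI_Sp cardTk cards0 (@GnE _ _ _ 2%N); first lra.
  by rewrite /Gn; lia.
- move=> i; have := hX (Sst i).
  rewrite xsum_Sst rhobar_cE /GX PI_Sst MI_Sst cards1 cardC1k (@GnE _ _ _ 0%N) ?mulr0 //.
  by rewrite /Gn; lia.
- move=> i; apply/andP; split.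
  + have := hX [set~ ((i, true) : Spm k)].
    rewrite rhobar_cE /GX PI_C1t MI_C1t cardC1k cardTk (@GnE _ _ _ 0%N) ?mulr0; last by rewrite /Gn; lia.
    have := xsum_C1 x ((i, true) : Spm k); rewrite hT T0; lra.
  + have := hX [set ((i, true) : Spm k)].
    rewrite /xsum big_set1 rhobar_cE /GX PI_1t MI_1t cards1 cards0 (@GnE _ _ _ 1%N); first lra.
    by rewrite /Gn; lia.
- move=> i; apply/andP; split.
  + have := hX [set~ ((i, false) : Spm k)].
    rewrite rhobar_cE /GX PI_C1f MI_C1f cardC1k cardTk (@GnE _ _ _ 1%N); last by rewrite /Gn; lia.
    have := xsum_C1 x ((i, false) : Spm k); rewrite hT T0; lra.
  + have := hX [set ((i, false) : Spm k)].
    rewrite /xsum big_set1 rhobar_cE /GX PI_1f MI_1f cards0 cards1 (@GnE _ _ _ 0%N) ?mulr0 //.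
    by rewrite /Gn; lia.
- have := hX Sm; rewrite rhobar_cE /GX PI_Sm MI_Sm cards0 cardTk (@GnEN _ _ _ 2%N); first lra.
  by rewrite /Gn; lia.
Qed.

End Work5.

Unset Implicit Arguments.
Local Open Scope ring_scope.

Theorem lemma4p2 (R : realFieldType) (k : nat) (c : R) :
  (3 <= k)%N -> 0 <= c ->
  [/\ @rho_c k R c set0 = 0 /\ t_monotone (@rho_c k R c) /\ submodular (@rho_c k R c),
      @rhobar_c k R c set0 = 0 /\ t_monotone (@rhobar_c k R c) /\ submodular (@rhobar_c k R c),
      (forall x : Spm k -> R, @in_Bc k R c x <-> in_base (@rho_c k R c) x)
    & (forall x : Spm k -> R, @in_Bbar_c k R c x <-> in_base (@rhobar_c k R c) x)].
Proof.
move=> k2 c0.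
have k1 : (1 < k)%N by lia. have k0 : (0 < k)%N by lia.
have P0 : PI (set0 : {set Spm k}) = set0 by apply/setP => j; rewrite !inE.
have M0 : MI (set0 : {set Spm k}) = set0 by apply/setP => j; rewrite !inE.
split.
- split; [|split].
  + by rewrite rho_cE // /FX P0 M0 cards0 set0I cards0 Fn_zero ?mulr0n ?mulr0 //; left.
  + move=> X; rewrite !rho_cE //; apply: ler_wpM2l => //; rewrite ler_nat; exact: FX_red.
  + move=> X Y; rewrite !rho_cE // -!mulrDr -!natrD; apply: ler_wpM2l => //.
    rewrite ler_nat; exact: FX_sub.
- split; [|split].
  + rewrite rhobar_cE /GX P0 M0 cards0 (@GnE _ _ _ _ _ 0%N) ?mulr0 //.
    by rewrite /Gn; lia.
  + move=> X; rewrite !rhobar_cE; apply: ler_wpM2l => //; rewrite ler_int; exact: GX_red.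
  + move=> X Y; rewrite !rhobar_cE -!mulrDr -!intrD; apply: ler_wpM2l => //.
    rewrite ler_int; exact: GX_sub.
- by move=> x; split; [exact: Bc_fwd | exact: Bc_bwd].
- by move=> x; split; [exact: Bbar_fwd | exact: Bbar_bwd].
Qed.
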